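(* Consider the two-player continuous time stochastic game with $S=\{1,2\}$, $A^1(1)=A^2(1)=\{1,2\}$, $A^1(2)=A^2(2)=\{1\}$, rewards $(r^1,r^2)$ and transition rates as follows: at state $1$, $(a^1,a^2)=(1,1)$ gives rewards $(4,9)$ and $\mu(2,1,1,1)=0$; $(1,2)$ gives $(6,3)$ and $\mu(2,1,1,2)=1$; $(2,1)$ gives $(5,4)$ and $\mu(2,1,2,1)=0$; $(2,2)$ gives $(4,5)$ and $\mu(2,1,2,2)=1$; at state $2$ the single action pair gives $(6,7)$ and $\mu(1,2,1,1)=1$. Then for every discount rate $\alpha>0$ the game has a unique stationary $\alpha$-discounted Nash equilibrium, namely $f^*_\alpha(1)=\left(\frac{4+\alpha}{12+7\alpha},\frac{8+6\alpha}{12+7\alpha}\right)$, $g^*_\alpha(1)=(\frac23,\frac13)$. Consequently this game (in which transition rates depend only on player 2's actions) has no stationary Blackwell-Nash equilibrium.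
   Context: A two-player continuous time stochastic game consists of a finite state set $S$, finite nonempty action sets $A^1(s),A^2(s)$, reward rates $r^i(s,a^1,a^2)$ ($i=1,2$), and transition rates $\mu(s',s,a^1,a^2)\ge0$ from $s$ to $s'\ne s$, with $\mu(s,s,a^1,a^2)=-\sum_{s'\ne s}\mu(s',s,a^1,a^2)$. Stationary strategies $f,g$ assign to each state a probability distribution on $A^1(s)$, resp. $A^2(s)$. For a stationary pair, $r^i(s,f,g)=\sum_{a^1,a^2}f(s,a^1)g(s,a^2)r^i(s,a^1,a^2)$ and $Q(f,g)$ is the generator matrix with $Q(f,g)_{ss'}=\sum_{a^1,a^2}f(s,a^1)g(s,a^2)\mu(s',s,a^1,a^2)$. For $\alpha>0$ the $\alpha$-discounted payoff is $v^i_\alpha(s,f,g)=E^s_{f,g}\int_0^\infty e^{-\alpha t}r^i(s_t,f,g)\,dt$, i.e. $v^i_\alpha(f,g)=(\alpha I-Q(f,g))^{-1}r^i(f,g)$. A stationary pair $(f^*,g^* )$ is an $\alpha$-discounted Nash equilibrium if for all $s$, $v^1_\alpha(s,f^*,g^* )\ge v^1_\alpha(s,f,g^* )$ for all stationary $f$ and $v^2_\alpha(s,f^*,g^* )\ge v^2_\alpha(s,f^*,g)$ for all stationary $g$. It is a Blackwell-Nash equilibrium (BNE) if there is $\alpha_0>0$ such that it is an $\alpha$-discounted Nash equilibrium for all $\alpha\in(0,\alpha_0]$. *)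

(* Defs.v *)
From HB Require Import structures.
From mathcomp Require Import all_boot all_order all_algebra.
Set Implicit Arguments. Unset Strict Implicit. Unset Printing Implicit Defensive.
Import Order.TTheory GRing.Theory Num.Theory.
Local Open Scope ring_scope.

Section Game.
Variables (R : realFieldType) (n m : nat).

(* mu s' s a1 a2 = transition rate from s to s' (used only for s' <> s). *)
Record game := Game {
  A1 : 'I_n -> {set 'I_m};
  A2 : 'I_n -> {set 'I_m};
  rw1 : 'I_n -> 'I_m -> 'I_m -> R;
  rw2 : 'I_n -> 'I_m -> 'I_m -> R;
  mu : 'I_n -> 'I_n -> 'I_m -> 'I_m -> R }.

Definition strategy := 'I_n -> 'I_m -> R.

Definition stationary (A : 'I_n -> {set 'I_m}) (f : strategy) : Prop :=
  forall s, (forall a, 0 <= f s a) /\ (forall a, a \notin A s -> f s a = 0)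
            /\ \sum_(a in A s) f s a = 1.

Definition rew (G : game) (r : 'I_n -> 'I_m -> 'I_m -> R) (f g : strategy)
  : 'cV[R]_n :=
  \col_s \sum_(a1 in A1 G s) \sum_(a2 in A2 G s) f s a1 * g s a2 * r s a1 a2.

Definition muD (G : game) (s' s : 'I_n) (a1 a2 : 'I_m) : R :=
  if s' == s then - \sum_(t | t != s) mu G t s a1 a2 else mu G s' s a1 a2.

Definition Qgen (G : game) (f g : strategy) : 'M[R]_n :=
  \matrix_(s, s') \sum_(a1 in A1 G s) \sum_(a2 in A2 G s)
      f s a1 * g s a2 * muD G s' s a1 a2.

Definition disc_payoff (G : game) (r : 'I_n -> 'I_m -> 'I_m -> R)
  (alpha : R) (f g : strategy) : 'cV[R]_n :=
  invmx (alpha%:M - Qgen G f g) *m rew G r f g.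

Definition disc_nash (G : game) (alpha : R) (f g : strategy) : Prop :=
  stationary (A1 G) f /\ stationary (A2 G) g /\
  (forall s f', stationary (A1 G) f' ->
     disc_payoff G (rw1 G) alpha f' g s ord0 <= disc_payoff G (rw1 G) alpha f g s ord0) /\
  (forall s g', stationary (A2 G) g' ->
     disc_payoff G (rw2 G) alpha f g' s ord0 <= disc_payoff G (rw2 G) alpha f g s ord0).

Definition blackwell_nash (G : game) (f g : strategy) : Prop :=
  exists alpha0, 0 < alpha0 /\
    forall alpha, 0 < alpha -> alpha <= alpha0 -> disc_nash G alpha f g.

End Game.

(* The example: state 1 = ord 0, state 2 = ord 1; action 1 = ord 0, action 2 = ord 1. *)
Section Example.
Variable R : realFieldType.

Definition ex_A (s : 'I_2) : {set 'I_2} :=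
  if val s == 0%N then setT else [set ord0].

Definition ex_r1 (s a1 a2 : 'I_2) : R :=
  if val s == 0%N then
    (if val a1 == 0%N then (if val a2 == 0%N then 4 else 6)
     else (if val a2 == 0%N then 5 else 4))
  else 6.

Definition ex_r2 (s a1 a2 : 'I_2) : R :=
  if val s == 0%N then
    (if val a1 == 0%N then (if val a2 == 0%N then 9 else 3)
     else (if val a2 == 0%N then 4 else 5))
  else 7.

Definition ex_mu (s' s a1 a2 : 'I_2) : R :=
  if val s == 0%N then (if val a2 == 0%N then 0 else 1) else 1.

Definition ex_game : game R 2 2 := Game ex_A ex_A ex_r1 ex_r2 ex_mu.

Definition fstar (alpha : R) : strategy R 2 2 := fun s a =>
  if val s == 0%N then
    (if val a == 0%N then (4 + alpha) / (12 + 7 * alpha)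
     else (8 + 6 * alpha) / (12 + 7 * alpha))
  else (if val a == 0%N then 1 else 0).

Definition gstar : strategy R 2 2 := fun s a =>
  if val s == 0%N then (if val a == 0%N then 2 / 3 else 1 / 3)
  else (if val a == 0%N then 1 else 0).

End Example.

(* Main.v *)
Require Import Defs.
From mathcomp Require Import all_boot all_order all_algebra.
From mathcomp Require Import ring lra.
From Stdlib Require Import FunctionalExtensionality.
Import Order.TTheory GRing.Theory Num.Theory.
Local Open Scope ring_scope.

Lemma I2 (i : 'I_2) : i = ord0 \/ i = ord_max.
Proof. case: i => [[|[|k]] Hk]; [left|right|by []]; exact: val_inj. Qed.

Section S.
Variable R : realFieldType.

Lemma sum2 (F : 'I_2 -> R) : \sum_(i < 2) F i = F ord0 + F ord_max.
Proof. by rewrite big_ord_recl big_ord1; congr (_ + F _); apply: val_inj. Qed.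

Lemma solve22 (M : 'M[R]_2) (x : 'cV[R]_2) :
  let d := M ord0 ord0 * M ord_max ord_max - M ord0 ord_max * M ord_max ord0 in
  d != 0 ->
  invmx M *m x = \col_i (if i == ord0 then (M ord_max ord_max * x ord0 ord0 - M ord0 ord_max * x ord_max ord0) / d
                         else (M ord0 ord0 * x ord_max ord0 - M ord_max ord0 * x ord0 ord0) / d).
Proof.
move=> d dn0.
set w := \col_i _.
pose B : 'M[R]_2 := \matrix_(i, j) (if i == ord0 then (if j == ord0 then M ord_max ord_max / d else - M ord0 ord_max / d)
   else (if j == ord0 then - M ord_max ord0 / d else M ord0 ord0 / d)).
have MB : M *m B = 1%:M.
  apply/matrixP => i j; rewrite !mxE sum2 !mxE.
  case: (I2 i) => ->; case: (I2 j) => -> /=; rewrite /d; field; exact: dn0.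
have [Mu _] := mulmx1_unit MB.
have Mw : M *m w = x.
  apply/matrixP => i j; rewrite !mxE sum2 !mxE.
  have -> : j = ord0 by apply: val_inj; case: j => [[|k] Hk].
  case: (I2 i) => -> /=; rewrite /d; field; exact: dn0.
by rewrite -Mw mulKmx.
Qed.
Lemma sumA0 (F : 'I_2 -> R) : \sum_(a in ex_A ord0) F a = F ord0 + F ord_max.
Proof. rewrite /ex_A /= (eq_bigl xpredT); last by move=> i; rewrite in_setT. exact: sum2. Qed.
Lemma sumA1 (F : 'I_2 -> R) : \sum_(a in ex_A ord_max) F a = F ord0.
Proof. by rewrite /ex_A /= big_set1. Qed.
Lemma sumN0 (F : 'I_2 -> R) : \sum_(t | t != ord0) F t = F ord_max.
Proof. by rewrite big_mkcond sum2 /= add0r. Qed.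
Lemma sumN1 (F : 'I_2 -> R) : \sum_(t | t != ord_max) F t = F ord0.
Proof. by rewrite big_mkcond sum2 /= addr0. Qed.

Lemma stat_ex (f : strategy R 2 2) : stationary ex_A f ->
  [/\ 0 <= f ord0 ord0, 0 <= f ord0 ord_max, f ord0 ord_max = 1 - f ord0 ord0,
      f ord_max ord0 = 1 & f ord_max ord_max = 0].
Proof.
move=> H; have [H0 [_ S0]] := H ord0; have [_ [N1 S1]] := H ord_max.
rewrite sumA0 in S0; rewrite sumA1 in S1.
split => //; first by move: S0; lra.
by apply: N1; rewrite /ex_A /= in_set1.
Qed.

Lemma stat_mk (x : R) (f : strategy R 2 2) : 0 <= x -> x <= 1 ->
  f ord0 ord0 = x -> f ord0 ord_max = 1 - x -> f ord_max ord0 = 1 -> f ord_max ord_max = 0 ->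
  stationary ex_A f.
Proof.
move=> x0 x1 e1 e2 e3 e4 s; case: (I2 s) => ->; split.
- by move=> a; case: (I2 a) => ->; rewrite ?e1 ?e2 // subr_ge0.
- by split; [move=> a; rewrite /ex_A /= in_setT | rewrite sumA0 e1 e2 addrC subrK].
- by move=> a; case: (I2 a) => ->; rewrite ?e3 ?e4.
- split; last by rewrite sumA1 e3.
  by move=> a; case: (I2 a) => -> //; rewrite /ex_A /= in_set1.
Qed.

Lemma pay (r : 'I_2 -> 'I_2 -> 'I_2 -> R) (alpha : R) (f g : strategy R 2 2) :
  0 < alpha -> stationary ex_A f -> stationary ex_A g ->
  let p := f ord0 ord0 in let q := g ord0 ord0 in
  let R0 := p*q*r ord0 ord0 ord0 + p*(1-q)*r ord0 ord0 ord_max + (1-p)*q*r ord0 ord_max ord0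
            + (1-p)*(1-q)*r ord0 ord_max ord_max in
  let R1 := r ord_max ord0 ord0 in
  disc_payoff (ex_game R) r alpha f g ord0 ord0 = ((alpha+1)*R0 + (1-q)*R1)/(alpha*(alpha+2-q)) /\
  disc_payoff (ex_game R) r alpha f g ord_max ord0 = ((alpha+1-q)*R1 + R0)/(alpha*(alpha+2-q)).
Proof.
move=> a0 /stat_ex [f0 f1 f2 f3 f4] /stat_ex [g0 g1 g2 g3 g4] p q R0 R1.
have q1 : q <= 1 by rewrite -subr_ge0 -g2.
have dpos : 0 < alpha * (alpha + 2 - q) by apply: mulr_gt0 => //; lra.
have Hd : (alpha%:M - Qgen (ex_game R) f g) ord0 ord0 *
 (alpha%:M - Qgen (ex_game R) f g) ord_max ord_max -
 (alpha%:M - Qgen (ex_game R) f g) ord0 ord_max *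
 (alpha%:M - Qgen (ex_game R) f g) ord_max ord0 = alpha * (alpha + 2 - q).
  rewrite !mxE /= !sumA0 !sumA1 /muD /= !sumN0 !sumN1 /ex_mu /= -/p -/q f2 f3 g2 g3 ?mulr1n ?mulr0n.
  rewrite /p /q; ring.
rewrite /disc_payoff solve22; last by apply: (@eq_ind_r _ _ (fun x => x != 0) _ _ Hd); rewrite gt_eqF.
rewrite ?Hd.
rewrite !mxE /= !sumA0 !sumA1 /muD /= !sumN0 !sumN1 /ex_mu /= -/p -/q f2 f3 g2 g3 ?mulr1n ?mulr0n.
split; congr (_ / _); rewrite /R0 /R1 /p /q; ring.
Qed.

Lemma frac_le (a b c d : R) : 0 < b -> 0 < d -> a / b <= c / d -> a * d <= c * b.
Proof. move=> b0 d0; rewrite ler_pdivlMr // mulrAC ler_pdivrMr //. Qed.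

Definition sp (x : R) : strategy R 2 2 := fun s a =>
  if val s == 0%N then (if val a == 0%N then x else 1 - x) else (if val a == 0%N then 1 else 0).

Lemma stat_sp x : 0 <= x -> x <= 1 -> stationary ex_A (sp x).
Proof. by move=> x0 x1; apply: (@stat_mk x). Qed.

Lemma exist_part (alpha : R) : 0 < alpha ->
  disc_nash (ex_game R) alpha (fstar alpha) (gstar R).
Proof.
move=> a0.
have d0 : 0 < 12 + 7 * alpha by lra.
have Sf : stationary ex_A (fstar alpha).
  apply: (@stat_mk ((4 + alpha) / (12 + 7 * alpha))) => //=.
  - by apply: divr_ge0; lra.
  - by rewrite ler_pdivrMr //; lra.
  - by rewrite /fstar /=; field; rewrite gt_eqF.
have Sg : stationary ex_A (gstar R).
  by apply: (@stat_mk (2/3)); rewrite /gstar /=; lra.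
split => //; split => //; split.
- move=> s f' Sf'.
  have [A0 A1] := pay (rw1 (ex_game R)) _ _ _ a0 Sf' Sg.
  have [B0 B1] := pay (rw1 (ex_game R)) _ _ _ a0 Sf Sg.
  case: (I2 s) => ->; rewrite ?A0 ?B0 ?A1 ?B1 /fstar /gstar /ex_r1 /=;
    rewrite le_eqVlt; apply/orP; left; apply/eqP; field; rewrite !gt_eqF //; lra.
- move=> s g' Sg'.
  have [A0 A1] := pay (rw2 (ex_game R)) _ _ _ a0 Sf Sg'.
  have [B0 B1] := pay (rw2 (ex_game R)) _ _ _ a0 Sf Sg.
  have [_ g1 g2 _ _] := stat_ex _ Sg'.
  have q'1 : g' ord0 ord0 <= 1 by lra.
  case: (I2 s) => ->; rewrite ?A0 ?B0 ?A1 ?B1 /fstar /gstar /ex_r2 /=;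
    rewrite le_eqVlt; apply/orP; left; apply/eqP; field; rewrite !gt_eqF //; lra.
Qed.

Lemma uniq_part (alpha : R) (f g : strategy R 2 2) : 0 < alpha ->
  disc_nash (ex_game R) alpha f g -> f = fstar alpha /\ g = gstar R.
Proof.
move=> a0 [Sf [Sg [N1 N2]]].
have [f0 f1 f2 f3 f4] := stat_ex _ Sf.
have [g0 g1 g2 g3 g4] := stat_ex _ Sg.
set p := f ord0 ord0 in f0 f1 f2 *.
set q := g ord0 ord0 in g0 g1 g2 *.
have p1 : p <= 1 by lra.
have q1 : q <= 1 by lra.
have H1 : forall x : R, 0 <= x -> x <= 1 -> (alpha + 1) * (2 - 3 * q) * (x - p) <= 0.
  move=> x x0 x1; have := N1 ord0 (sp x) (@stat_sp x x0 x1).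
  have [A0 _] := pay (rw1 (ex_game R)) _ _ _ a0 (@stat_sp x x0 x1) Sg.
  have [B0 _] := pay (rw1 (ex_game R)) _ _ _ a0 Sf Sg.
  rewrite A0 B0 /sp /= -/p -/q => /frac_le.
  have dpos : 0 < alpha * (alpha + 2 - q) by apply: mulr_gt0 => //; lra.
  move=> /(_ dpos dpos) H. 
  nra.
pose K := (alpha + 2) * (7 * p - 1) + 5 - 2 * p - 7.
have H2 : forall y : R, 0 <= y -> y <= 1 -> (y - q) * (alpha * (alpha + 1) * K) <= 0.
  move=> y y0 y1; have := N2 ord0 (sp y) (@stat_sp y y0 y1).
  have [A0 _] := pay (rw2 (ex_game R)) _ _ _ a0 Sf (@stat_sp y y0 y1).
  have [B0 _] := pay (rw2 (ex_game R)) _ _ _ a0 Sf Sg.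
  rewrite A0 B0 /sp /= -/p -/q => /frac_le.
  have dpos : 0 < alpha * (alpha + 2 - q) by apply: mulr_gt0 => //; lra.
  have dpos' : 0 < alpha * (alpha + 2 - y) by apply: mulr_gt0 => //; lra.
  move=> /(_ dpos' dpos) H.
  rewrite /K; nra.
have aa : 0 < alpha * (alpha + 1) by apply: mulr_gt0; lra.
have qeq : q = 2/3.
  case: (ltgtP q (2/3)) => // hq.
  - have hp : p = 1.
      have := H1 1 ler01 (lexx _).
      have : 0 < (alpha+1)*(2-3*q) by apply: mulr_gt0; lra.
      nra.
    have hK : 0 < K by rewrite /K hp; lra.
    have := H2 1 ler01 (lexx _).
    have : 0 < (1 - q) * (alpha * (alpha + 1) * K).
      by apply: mulr_gt0; [lra | apply: mulr_gt0].
    lra.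
  - have hp : p = 0.
      have := H1 0 (lexx _) ler01.
      have : 0 < (alpha+1)*(3*q-2) by apply: mulr_gt0; lra.
      nra.
    have hK : K = - (alpha + 4) by rewrite /K hp; ring.
    have := H2 0 (lexx _) ler01.
    have : 0 < q * (alpha * (alpha + 1) * (alpha + 4)).
      by apply: mulr_gt0; [lra | apply: mulr_gt0 => //; lra].
    rewrite hK.
    nra.
have hK : K = 0.
  have := H2 1 ler01 (lexx _); have := H2 0 (lexx _) ler01.
  rewrite qeq.
  set X := alpha * (alpha + 1) * K => Ha Hb.
  have X0 : X = 0 by lra.
  by move: X0; rewrite /X => /eqP; rewrite mulf_eq0 gt_eqF //= => /eqP.
have d0 : 12 + 7 * alpha != 0 by rewrite gt_eqF //; lra.
have pv : p = (4 + alpha) / (12 + 7 * alpha).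
  apply: (mulIf d0); rewrite divfK //.
  move: hK; rewrite /K => hK; lra.
split; apply: functional_extensionality => s; apply: functional_extensionality => a;
  case: (I2 s) => ->; case: (I2 a) => ->; rewrite /fstar /gstar /= ?f2 ?f3 ?f4 ?g2 ?g3 ?g4 -/p -/q ?pv ?qeq //.
all: by field; rewrite ?d0.
Qed.

End S.

Theorem mainTheorem5 (R : realFieldType) :
  (forall alpha : R, 0 < alpha ->
     disc_nash (ex_game R) alpha (fstar alpha) (gstar R) /\
     (forall f g : strategy R 2 2, disc_nash (ex_game R) alpha f g ->
        f = fstar alpha /\ g = gstar R)) /\
  ~ (exists f g : strategy R 2 2, blackwell_nash (ex_game R) f g).
Proof.
split.
  move=> alpha a0; split; first exact: exist_part.
  by move=> f g; apply: uniq_part.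
case=> f [g [a [apos H]]].
have h2 : 0 < a / 2 by lra.
have h2' : a / 2 <= a by lra.
have [E1 _] := @uniq_part _ _ _ _ apos (H a apos (lexx _)).
have [E2 _] := @uniq_part _ _ _ _ h2 (H _ h2 h2').
have := congr1 (fun h => h ord0 ord0) (etrans (esym E1) E2).
rewrite /fstar /= => /eqP; rewrite eqr_div; try (rewrite gt_eqF //; lra).
move/eqP; nra.
Qed.
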